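(* Assume $\varepsilon\max_i\delta_i<1$. Suppose that either (i) $\mathcal G$ is structurally balanced (i.e. $\lambda_1(\mathcal L)=0$), or (ii) $\mathcal G$ is structurally unbalanced and $\lambda_1(\mathcal L)<2-\lambda_n(\mathcal L)$. Then $\pi_1<\pi_{1,d}$.
   Context: Let $\mathcal G$ be an undirected, connected signed graph on $n$ nodes without self-loops, with symmetric adjacency matrix $A=[a_{ij}]$ having zero diagonal and entries of either sign. Let $\delta_i=\sum_j|a_{ij}|>0$, $\Delta=\mathrm{diag}(\delta_i)$, and let $\mathcal L=I-\Delta^{-1}A$ be the normalized signed Laplacian, with real eigenvalues $\lambda_1(\mathcal L)\le\dots\le\lambda_n(\mathcal L)$. Structural balance means there is a signature matrix $S$ (diagonal with $\pm1$ entries) such that $SAS\ge0$ entrywise. Let $\varepsilon>0$ be a step size and, for $\pi>0$, let $L_\pi=\Delta-\pi A$ and $J_\pi=I-\varepsilon L_\pi$, both symmetric. Define $\pi_1=\frac{1}{1-\lambda_1(\mathcal L)}$; this is the value of $\pi$ at which $\lambda_1(L_\pi)=0$, equivalently $\lambda_n(J_\pi)=1$. Define $\pi_{1,d}$ as the smallest $\pi>0$ at which $\lambda_n(L_\pi)=2/\varepsilon$, equivalently $\lambda_1(J_\pi)=-1$. *)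

(* Defs.v *)
From HB Require Import structures.
From mathcomp Require Import all_boot all_order all_algebra.
From mathcomp Require Import reals.
Set Implicit Arguments. Unset Strict Implicit. Unset Printing Implicit Defensive.
Import Order.TTheory GRing.Theory Num.Theory.
Local Open Scope ring_scope.

Section SignedGraph.
Variables (R : realType) (n : nat).

Definition sdeg (A : 'M[R]_n) (i : 'I_n) : R := \sum_(j < n) `|A i j|.

Definition Deg (A : 'M[R]_n) : 'M[R]_n := diag_mx (\row_i sdeg A i).

Definition normLap (A : 'M[R]_n) : 'M[R]_n := 1%:M - invmx (Deg A) *m A.

Definition Lpi (A : 'M[R]_n) (p : R) : 'M[R]_n := Deg A - p *: A.

Definition is_min_eig (M : 'M[R]_n) (l : R) : Prop :=
  eigenvalue M l /\ forall mu, eigenvalue M mu -> l <= mu.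
Definition is_max_eig (M : 'M[R]_n) (l : R) : Prop :=
  eigenvalue M l /\ forall mu, eigenvalue M mu -> mu <= l.

Definition sg_connected (A : 'M[R]_n) : Prop :=
  forall i j : 'I_n, connect (fun u v : 'I_n => A u v != 0) i j.

Definition is_signature (S : 'M[R]_n) : Prop :=
  (forall i j : 'I_n, i != j -> S i j = 0) /\
  (forall i : 'I_n, S i i = 1 \/ S i i = -1).

Definition struct_balanced (A : 'M[R]_n) : Prop :=
  exists S : 'M[R]_n, is_signature S /\ forall i j, 0 <= (S *m A *m S) i j.

Definition pi1 (l1 : R) : R := 1 / (1 - l1).

Definition is_pi1d (A : 'M[R]_n) (eps p : R) : Prop :=
  (0 < p /\ is_max_eig (Lpi A p) (2 / eps)) /\
  forall q, 0 < q -> is_max_eig (Lpi A q) (2 / eps) -> p <= q.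

End SignedGraph.

(* Main.v *)
Require Import Defs.
From HB Require Import structures.
From mathcomp Require Import all_boot all_order all_algebra.
From mathcomp Require Import reals.
From mathcomp Require Import complex.
From mathcomp Require Import ring lra.
Import Order.TTheory GRing.Theory Num.Theory.
Set Implicit Arguments. Unset Strict Implicit. Unset Printing Implicit Defensive.
Local Open Scope ring_scope.

Section Ray.
Import Num.Def.

Variable R : rcfType.
Local Notation f := (real_complex R).

Lemma conjf (x : R) : conjC (f x) = f x.
Proof. exact: conjc_real. Qed.

Lemma rayleigh n (M : 'M[R]_n) (x : 'rV[R]_n) : M^T = M -> x != 0 ->
  exists mu, eigenvalue M mu /\ mu * (x *m x^T) 0 0 <= (x *m M *m x^T) 0 0.
Proof.
move=> Msym xn0.
case: n M x Msym xn0 => [|n] M x Msym xn0.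
  by move: xn0; rewrite [x]thinmx0 eqxx.
set MC := map_mx f M.
have herm : MC \is hermsymmx.
  apply/is_hermitianmxP; rewrite expr0 scale1r; apply/matrixP => i j.
  by rewrite !mxE conjf; have := congr1 (fun N : 'M_n.+1 => N i j) Msym; rewrite mxE => ->.
have MCE := orthomx_spectralP (hermitian_normalmx herm).
have dreal := hermitian_spectral_diag_real herm.
move: MCE dreal; set P := spectralmx MC; set d := spectral_diag MC => MCE dreal.
have Pu : P \is unitarymx by exact: spectral_unitarymx.
have Punit : P \in unitmx by exact: spectral_unit.
have dE j : d 0 j = f (complex.Re (d 0 j)).
  by rewrite RRe_real //; exact: (mxOverP dreal).
pose i := Order.arg_min (ord0 : 'I_n.+1) xpredT (fun j => complex.Re (d 0 j)).
have imin : forall j, complex.Re (d 0 i) <= complex.Re (d 0 j).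
  by move=> j; rewrite /i; case: (@arg_minP _ _ _ (ord0 : 'I_n.+1) xpredT (fun j => complex.Re (d 0 j)) (erefl true)) => k _; apply.
exists (complex.Re (d 0 i)); split.
  have eC : eigenvalue MC (d 0 i).
    apply/eigenvalueP; exists (row i P).
      rewrite -row_mul {1}MCE !mulmxA mulmxV // mul1mx.
      by apply/rowP => j; rewrite mul_diag_mx !mxE.
    apply/eqP; rewrite rowE => r0.
    have Pf : row_free P by rewrite row_free_unit.
    have := row_free_inj Pf (etrans r0 (esym (mul0mx _ P))).
    move/matrixP => /(_ 0 i); rewrite !mxE !eqxx /=.
    by move/eqP; rewrite oner_eq0.
  move: eC; rewrite dE !eigenvalue_root_char -map_char_poly fmorph_root //.
set r := complex.Re (d 0 i).
rewrite -lecR rmorphM /=.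
set xC := map_mx f x.
have xCs : map_mx conjC (xC^T) = map_mx f (x^T).
  by apply/matrixP=> a b; rewrite !mxE conjf.
have e1 : f ((x *m M *m x^T) 0 0) = (xC *m MC *m map_mx conjC (xC^T)) 0 0.
  by rewrite xCs -!map_mxM [in RHS]mxE.
have e2 : f ((x *m x^T) 0 0) = (xC *m map_mx conjC (xC^T)) 0 0.
  by rewrite xCs -!map_mxM [in RHS]mxE.
rewrite e1 e2.
set Q := invmx P.
have QE : Q = map_mx conjC (P^T) by rewrite /Q invmx_unitary.
set y := xC *m Q.
have ys : map_mx conjC (y^T) = P *m map_mx conjC (xC^T).
  by rewrite /y trmx_mul map_mxM QE map_trmx trmxK -map_mx_comp (map_mx_id (@conjCK _)).
have -> : xC *m MC *m map_mx conjC (xC^T) = y *m diag_mx d *m map_mx conjC (y^T).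
  by rewrite ys MCE /y !mulmxA.
have -> : xC *m map_mx conjC (xC^T) = y *m map_mx conjC (y^T).
  by rewrite ys /y mulmxA -(mulmxA xC Q P) mulVmx // mulmx1.
rewrite mul_mx_diag !mxE mulr_sumr; apply: ler_sum => j _.
rewrite !mxE [X in _ <= X]mulrAC [X in X <= _]mulrC ler_wpM2l //.
  exact: mul_conjC_ge0.
by rewrite (dE j) lecR imin.
Qed.
End Ray.

Section Aux.
Variables (R : realType) (n : nat) (A : 'M[R]_n).
Hypothesis Asym : A^T = A.
Hypothesis dpos : forall i, 0 < sdeg A i.

Lemma Asym_e i j : A j i = A i j.
Proof. by have := congr1 (fun N : 'M_n => N i j) Asym; rewrite mxE. Qed.

Lemma sdeg_col j : sdeg A j = \sum_k `|A k j|.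
Proof. by apply: eq_bigr => k _; rewrite Asym_e. Qed.

Lemma diag1 (d : 'rV[R]_n) : (forall j, d 0 j = 1) -> diag_mx d = 1%:M.
Proof.
move=> h; rewrite -diag_const_mx; congr diag_mx; apply/rowP => j.
by rewrite h !mxE.
Qed.

Definition sq i := Num.sqrt (sdeg A i).
Definition Ds := diag_mx (\row_i sq i).
Definition Di := diag_mx (\row_i (sq i)^-1).
Definition Dinv := diag_mx (\row_i (sdeg A i)^-1).

Lemma sq_gt0 i : 0 < sq i.
Proof. by rewrite sqrtr_gt0. Qed.

Lemma sq_sq i : sq i * sq i = sdeg A i.
Proof. by rewrite -expr2 sqr_sqrtr // ltW. Qed.

Lemma DsDi : Ds *m Di = 1%:M.
Proof. by rewrite mulmx_diag; apply: diag1 => j; rewrite !mxE mulfV // gt_eqF // sq_gt0. Qed.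

Lemma DiDs : Di *m Ds = 1%:M.
Proof. by rewrite mulmx_diag; apply: diag1 => j; rewrite !mxE mulVf // gt_eqF // sq_gt0. Qed.

Lemma DsDs : Ds *m Ds = Deg A.
Proof. by rewrite mulmx_diag /Deg; congr diag_mx; apply/rowP => j; rewrite !mxE sq_sq. Qed.

Lemma DiDeg : Di *m Deg A = Ds.
Proof.
rewrite mulmx_diag /Ds; congr diag_mx; apply/rowP => j; rewrite !mxE -sq_sq.
by rewrite mulrA mulVf ?mul1r // gt_eqF // sq_gt0.
Qed.

Lemma DegDinv : Deg A *m Dinv = 1%:M.
Proof. by rewrite mulmx_diag; apply: diag1 => j; rewrite !mxE mulfV // gt_eqF. Qed.

Lemma Deg_unit : Deg A \in unitmx.
Proof. by case: (mulmx1_unit DegDinv). Qed.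

Lemma invDeg : invmx (Deg A) = Dinv.
Proof. by rewrite -[RHS](mulKmx Deg_unit) DegDinv mulmx1. Qed.


Lemma eig_normLap (t : 'rV[R]_n) (mu : R) : t != 0 ->
  t *m A = mu *: (t *m Deg A) -> eigenvalue (normLap A) (1 - mu).
Proof.
move=> tn0 htA; apply/eigenvalueP; exists (t *m Deg A).
  rewrite /normLap mulmxBr mulmx1 mulmxA (mulmxK Deg_unit) htA.
  by rewrite scalerBl scale1r.
apply: contra tn0 => /eqP h; apply/eqP.
by rewrite -(mulmxK Deg_unit t) h mul0mx.
Qed.

Lemma gersh (t : 'rV[R]_n) (mu : R) : t != 0 ->
  t *m A = mu *: (t *m Deg A) -> -1 <= mu.
Proof.
move=> /rV0Pn [i0 ti0] htA.
pose j := Order.arg_max i0 xpredT (fun k => `|t 0 k|).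
have jmax : forall k, `|t 0 k| <= `|t 0 j|.
  move=> k; rewrite /j.
  by case: (@arg_maxP _ _ _ i0 xpredT (fun k => `|t 0 k|) (erefl true)) => l _; apply.
have tjpos : 0 < `|t 0 j|.
  by apply: lt_le_trans (jmax i0); rewrite normr_gt0.
have e := congr1 (fun v : 'rV_n => v 0 j) htA.
rewrite /= /Deg mul_mx_diag !mxE in e.
have hb : 0 < `|t 0 j| * sdeg A j by rewrite mulr_gt0.
suff : `|mu| <= 1 by rewrite ler_norml => /andP[].
rewrite -(ler_pM2r hb) mul1r.
have -> : `|mu| * (`|t 0 j| * sdeg A j) = `|\sum_k t 0 k * A k j|.
  by rewrite e normrM normrM (ger0_norm (ltW (dpos j))).
apply: le_trans (ler_norm_sum _ _ _) _.
rewrite sdeg_col mulr_sumr; apply: ler_sum => k _.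
by rewrite normrM ler_wpM2r.
Qed.

Lemma bal_eig (i0 : 'I_n) : struct_balanced A -> eigenvalue (normLap A) 0.
Proof.
move=> [S [[Soff Sdiag] Spos]].
have SE : S = diag_mx (\row_i S i i).
  apply/matrixP => i j; rewrite !mxE; case: (eqVneq i j) => [->|ij].
    by rewrite mulr1n.
  by rewrite Soff // mulr0n.
have ssq i : S i i * S i i = 1 by case: (Sdiag i) => ->; rewrite ?mulr1 ?mulrNN ?mulr1.
have snorm i : `|S i i| = 1 by case: (Sdiag i) => ->; rewrite ?normrN normr1.
rewrite -(subrr 1); apply: (@eig_normLap (\row_j S j j)).
  apply/rV0Pn; exists i0; rewrite mxE; case: (Sdiag i0) => ->.
    by rewrite oner_eq0.
  by rewrite oppr_eq0 oner_eq0.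
rewrite scale1r /Deg mul_mx_diag; apply/rowP => j; rewrite !mxE.
have hp k : 0 <= S k k * A k j * S j j.
  have := Spos k j; rewrite SE mul_diag_mx mul_mx_diag !mxE.
  by rewrite !eqxx !mulr1n.
rewrite sdeg_col.
transitivity (S j j * \sum_k S k k * A k j * S j j).
  rewrite mulr_sumr; apply: eq_bigr => k _.
  by rewrite mxE -[LHS]mulr1 -(ssq j); ring.
congr (_ * _); apply: eq_bigr => k _.
by rewrite -[LHS]ger0_norm // !normrM !snorm mul1r mulr1.
Qed.

End Aux.

Theorem proposition2 (R : realType) (n : nat) (A : 'M[R]_n) (eps : R)
  (l1 ln p1d : R) :
  A^T = A ->
  (forall i : 'I_n, A i i = 0) ->
  (forall i : 'I_n, 0 < sdeg A i) ->
  sg_connected A ->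
  0 < eps ->
  (forall i : 'I_n, eps * sdeg A i < 1) ->
  is_min_eig (normLap A) l1 ->
  is_max_eig (normLap A) ln ->
  (struct_balanced A \/ (~ struct_balanced A /\ l1 < 2 - ln)) ->
  is_pi1d A eps p1d ->
  pi1 l1 < p1d.
Proof.
move=> Asym Adiag dpos conn epspos epsd [hl1e hl1m] [hlne hlnm] hcase.
move=> [[qpos [hqe _]] _].
set q := p1d in qpos hqe *.
set c := 2 / eps in hqe.
rewrite ltNge; apply/negP => hq.
have l1lt1 : l1 < 1.
  rewrite ltNge; apply/negP => h.
  have : pi1 l1 <= 0 by rewrite /pi1 mul1r invr_le0 subr_le0.
  by move=> h2; move: (le_lt_trans (le_trans hq h2) qpos); rewrite ltxx.
have hq1 : q * (1 - l1) <= 1.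
  by rewrite -ler_pdivlMr ?subr_gt0 //.
move/eigenvalueP: hqe => [x hx xn0].
have [i0 xi0] := rV0Pn _ xn0.
pose XA : R := (x *m A *m x^T) 0 0.
pose XD : R := (x *m Deg A *m x^T) 0 0.
pose XX : R := (x *m x^T) 0 0.
have key : XD - q * XA = c * XX.
  have := congr1 (fun v : 'rV_n => (v *m x^T) 0 0) hx.
  by rewrite /= /Lpi mulmxBr mulmxBl -scalemxAr -scalemxAl -scalemxAl /XD /XA /XX !mxE.
have XDE : XD = \sum_i sdeg A i * (x 0 i * x 0 i).
  rewrite /XD /Deg mul_mx_diag mxE; apply: eq_bigr => i _; rewrite !mxE.
  by rewrite mulrA [x 0 i * _]mulrC.
have XXE : XX = \sum_i (x 0 i * x 0 i).
  by rewrite /XX mxE; apply: eq_bigr => i _; rewrite !mxE.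
have XDge0 : 0 <= XD.
  by rewrite XDE; apply: sumr_ge0 => i _; apply: mulr_ge0; [exact: ltW | rewrite -expr2 sqr_ge0].
have Spos : 0 < c * XX - 2 * XD.
  have -> : c * XX - 2 * XD = \sum_i (c - 2 * sdeg A i) * (x 0 i * x 0 i).
    rewrite XXE XDE !mulr_sumr -sumrB; apply: eq_bigr => i _.
    by ring.
  have tpos i : 0 < c - 2 * sdeg A i.
    rewrite subr_gt0 /c ltr_pdivlMr //.
    have := epsd i; nra.
  have hge : forall i, true -> 0 <= (c - 2 * sdeg A i) * (x 0 i * x 0 i).
    by move=> i _; apply: mulr_ge0; [exact: ltW | rewrite -expr2 sqr_ge0].
  rewrite lt_def sumr_ge0 // andbT; apply/eqP => h.
  have := psumr_eq0P hge h (i := i0) (erefl true); move/eqP; rewrite mulf_eq0 gt_eqF //=.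
  by rewrite mulf_eq0 orbb (negPf xi0).
pose w := x *m Ds A.
pose N := Di A *m A *m Di A.
have Nsym : N^T = N.
  by rewrite /N !trmx_mul /Di tr_diag_mx Asym mulmxA.
have wn0 : w != 0.
  apply: contra xn0 => /eqP h; apply/eqP.
  by rewrite -[x]mulmx1 -(DsDi dpos) mulmxA -/w h mul0mx.
have wT : w^T = Ds A *m x^T by rewrite /w trmx_mul /Ds tr_diag_mx.
have wNw : (w *m N *m w^T) 0 0 = XA.
  rewrite wT /w /N !mulmxA -(mulmxA x (Ds A)) (DsDi dpos) mulmx1.
  by rewrite -(mulmxA _ (Di A)) (DiDs dpos) mulmx1.
have ww : (w *m w^T) 0 0 = XD.
  by rewrite wT /w mulmxA -(mulmxA x) (DsDs dpos).
have [mu [eigN hmu]] := rayleigh Nsym wn0.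
rewrite wNw ww in hmu.
have qmu : q * mu < -1.
  rewrite ltNge; apply/negP => h.
  have h1 : 0 <= (q * mu + 1) * XD by rewrite mulr_ge0 // -lerBlDr sub0r.
  have h2 : q * (mu * XD) <= q * XA by rewrite ler_wpM2l // ltW.
  move: key Spos h1 h2 qpos; clear; move: (XA) (XD) (XX) c q => a b e cc qq; nra.
move/eigenvalueP: eigN => [u hu un0].
pose t := u *m Di A.
have tn0 : t != 0.
  apply: contra un0 => /eqP h; apply/eqP.
  by rewrite -[u]mulmx1 -(DiDs dpos) mulmxA -/t h mul0mx.
have htA : t *m A = mu *: (t *m Deg A).
  have := congr1 (fun v => v *m Ds A) hu.
  rewrite /N !mulmxA -(mulmxA _ (Di A)) (DiDs dpos) mulmx1 -/t => ->.
  by rewrite -scalemxAl /t -mulmxA (DiDeg dpos).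
have hmu1 : 1 - mu <= ln by apply: hlnm; exact: (eig_normLap dpos tn0 htA).
have mul1 : l1 - 1 <= mu.
  case: hcase => [hb|[_ h2]].
    have l1le0 : l1 <= 0 by apply: hl1m; exact: (bal_eig Asym dpos i0 hb).
    have := gersh Asym dpos tn0 htA; lra.
  lra.
have : q * (l1 - 1) <= q * mu by rewrite ler_wpM2l // ltW.
nra.
Qed.
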